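(* Let $n\ge3$, let $S_n$ act on $V=\mathbb{C}^n$ by permutations, and fix $a,b\in\mathbb{C}$. For every $g\in S_n$, the component $\phi_g$ of $\phi(\kappa^C_{\mathrm{penta}},\kappa^L_{\mathrm{tri}})$ is identically zero.
   Context: $S_n$ acts by $\sigma e_i=e_{\sigma(i)}$; $V^g$ is the fixed space of $g$. $\kappa^L_{\mathrm{tri}}=\sum_g\kappa^L_gg$ is the linear 2-cochain supported on 3-cycles with $\kappa^L_{(ijk)}(e_i,e_j)=\kappa^L_{(ijk)}(e_j,e_k)=\kappa^L_{(ijk)}(e_k,e_i)=a(e_i+e_j+e_k)+b\sum_{l\notin\{i,j,k\}}e_l$ and $\kappa^L_{(ijk)}(e_l,e_m)=0$ whenever $e_l$ or $e_m$ lies in $V^{(ijk)}$. $\kappa^C_{\mathrm{penta}}=\sum_g\kappa^C_gg$ is the constant 2-cochain with $\kappa^C_g=0$ unless $g$ is a 5-cycle, and for a 5-cycle $g$, $\kappa^C_g(e_i,e_j)=(a-b)^2([g]_{ij}-[g]_{ji}-2[g^2]_{ij}+2[g^2]_{ji})$, where $[h]_{ij}=1$ if $i=h(j)$ and $0$ otherwise. For $\alpha$ constant and $\beta$ linear 2-cochains, $\phi(\alpha,\beta)=\sum_g\phi_gg$ with $\phi_g=\sum_{xy=g}\phi_{x,y}$ and $\phi_{x,y}(v_1,v_2,v_3)=\alpha_x(v_1+yv_1,\beta_y(v_2,v_3))+\alpha_x(v_2+yv_2,\beta_y(v_3,v_1))+\alpha_x(v_3+yv_3,\beta_y(v_1,v_2))$.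 *)

(* Defs.v *)
From HB Require Import structures.
From mathcomp Require Import all_boot all_order all_algebra all_fingroup.
From mathcomp Require Import reals complex.
Set Implicit Arguments. Unset Strict Implicit. Unset Printing Implicit Defensive.
Import Order.TTheory GRing.Theory Num.Theory.
Local Open Scope ring_scope.

Section Defs.
Variables (R : realType) (n : nat).
Local Notation C := (R[i]).
Local Notation V := ('rV[C]_n).
Local Notation Sn := ({perm 'I_n}).

Definition ebas (i : 'I_n) : V := delta_mx 0 i.

(* permutation action: sigma e_i = e_{sigma i}, i.e. (sigma v)_j = v_{sigma^-1 j} *)
Definition pact (s : Sn) (v : V) : V := \row_j v 0 ((s^-1)%g j).

Definition is_kcycle (k : nat) (g : Sn) : bool :=
  (#|[set i | g i != i]| == k) && [exists i, #|porbit g i| == k].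

Definition pmat (h : Sn) (i j : 'I_n) : C := (i == h j)%:R.

Definition bilinC (c : 'I_n -> 'I_n -> C) (u v : V) : C :=
  \sum_(i < n) \sum_(j < n) u 0 i * v 0 j * c i j.
Definition bilinV (c : 'I_n -> 'I_n -> V) (u v : V) : V :=
  \sum_(i < n) \sum_(j < n) (u 0 i * v 0 j) *: c i j.

(* The vector a(e_i+e_j+e_k) + b sum_{l notin {i,j,k}} e_l for g = (ijk):
   entry a on the support of g, b off it. *)
Definition wtri (a b : C) (g : Sn) : V :=
  \row_l (if g l != l then a else b).

(* kappa^L_(ijk) on basis pairs: (e_x, e_{g x}) |-> w for x moved by g
   (these are the pairs (e_i,e_j),(e_j,e_k),(e_k,e_i)), alternating, and 0 on
   all other pairs (in particular whenever one argument lies in V^g). *)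
Definition kappaL_basis (a b : C) (g : Sn) (l m : 'I_n) : V :=
  if (g l != l) && (m == g l) then wtri a b g
  else if (g m != m) && (l == g m) then - wtri a b g
  else 0.

Definition kappaL_tri (a b : C) (g : Sn) : V -> V -> V :=
  if is_kcycle 3 g then bilinV (kappaL_basis a b g) else fun _ _ => 0.

Definition kappaC_basis (a b : C) (g : Sn) (i j : 'I_n) : C :=
  (a - b) ^+ 2 * (pmat g i j - pmat g j i
                  - 2%:R * pmat (g * g)%g i j + 2%:R * pmat (g * g)%g j i).

Definition kappaC_penta (a b : C) (g : Sn) : V -> V -> C :=
  if is_kcycle 5 g then bilinC (kappaC_basis a b g) else fun _ _ => 0.

Definition phi_xy (alpha : Sn -> V -> V -> C) (beta : Sn -> V -> V -> V)
  (x y : Sn) (v1 v2 v3 : V) : C :=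
  alpha x (v1 + pact y v1) (beta y v2 v3)
  + alpha x (v2 + pact y v2) (beta y v3 v1)
  + alpha x (v3 + pact y v3) (beta y v1 v2).

(* phi_g = sum_{xy = g} phi_{x,y}, where xy is the composite x o y (first y,
   then x); in mathcomp's convention (s * t) i = t (s i), so xy = (y * x)%g. *)
Definition phi_g (alpha : Sn -> V -> V -> C) (beta : Sn -> V -> V -> V)
  (g : Sn) (v1 v2 v3 : V) : C :=
  \sum_(x : Sn) \sum_(y : Sn | (y * x)%g == g) phi_xy alpha beta x y v1 v2 v3.

End Defs.

(* Main.v *)
Require Import Defs.
From HB Require Import structures.
From mathcomp Require Import all_boot all_order all_algebra all_fingroup.
From mathcomp Require Import reals complex.
From mathcomp Require Import ring.
From Stdlib Require Import PeanoNat.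
Set Implicit Arguments. Unset Strict Implicit. Unset Printing Implicit Defensive.
Import GRing.Theory.

Fixpoint nthn (s : seq nat) (i d : nat) : nat :=
  match s, i with [::], _ => d | a :: _, 0 => a | _ :: t, S j => nthn t j d end.
Fixpoint nthz (s : seq int) (i : nat) : int :=
  match s, i with [::], _ => 0%R | a :: _, 0 => a | _ :: t, S j => nthz t j end.
Fixpoint idx (s : seq nat) (x : nat) : nat :=
  match s with [::] => 0 | a :: t => if Nat.eqb a x then 0 else S (idx t x) end.
Definition ap (s : seq nat) (i : nat) : nat := nthn s i i.
Definition api (s : seq nat) (i : nat) : nat := if Nat.ltb i (size s) then idx s i else i.
Definition tab kk (f : nat -> nat) := map f (iota 0 kk).
Definition zb (b : bool) : int := if b then 1%R else 0%R.
Definition mkc kk (f : nat -> nat) k :=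
  Nat.eqb (count (fun j => negb (Nat.eqb (f j) j)) (iota 0 kk)) k &&
  has (fun j => Nat.eqb (iter k f j) j && all (fun i => negb (Nat.eqb (iter i f j) j)) (iota 1 k.-1)) (iota 0 kk).
Definition sumz (l : seq int) : int := foldr (fun a b => (a + b)%R) 0%R l.
Definition mvf (s : nat -> nat) j := negb (Nat.eqb (s j) j).
Definition Rf (s x xi : nat -> nat) i : int :=
  (zb (mvf s (xi i)) - zb (mvf s (x i)) - 2 * zb (mvf s (xi (xi i))) + 2 * zb (mvf s (x (x i))))%R.
Definition sgf (s : nat -> nat) l m : int :=
  if mvf s l && Nat.eqb m (s l) then 1%R else if mvf s m && Nat.eqb l (s m) then (-1)%R else 0%R.
Definition Mf (s : nat -> nat) (R : nat -> int) p q r : int :=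
  (sgf s q r * (R p + R (s p)) + sgf s r p * (R q + R (s q)) + sgf s p q * (R r + R (s r)))%R.
Definition xtab kk (g si : seq nat) := tab kk (fun i => ap g (ap si i)).
Definition cond5 kk (gi si : seq nat * seq nat) :=
  let xt := xtab kk gi.1 si.2 in
  mkc kk (ap xt) 5 && all (fun j => mvf (ap si.1) j || mvf (ap xt) j) (iota 0 kk).
Definition Rt kk (gi si : seq nat * seq nat) :=
  map (Rf (ap si.1) (ap (xtab kk gi.1 si.2)) (ap (xtab kk si.1 gi.2))) (iota 0 kk).
Definition check kk : bool :=
  let P := [seq (s, tab kk (api s)) | s <- permutations (iota 0 kk)] in
  let L3 := [seq si <- P | mkc kk (ap si.1) 3] in
  all (fun gi => let L := [seq (si.1, Rt kk gi si) | si <- [seq si <- L3 | cond5 kk gi si]] in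
     all (fun p => all (fun q => all (fun r =>
        sumz [seq Mf (ap sR.1) (nthz sR.2) p q r | sR <- L] == 0%R)
     (iota 0 kk)) (iota 0 kk)) (iota 0 kk)) P.
Lemma check5 : check 5. Proof. vm_cast_no_check (erefl true). Qed.
Lemma check6 : check 6. Proof. vm_cast_no_check (erefl true). Qed.
Lemma check7 : check 7. Proof. vm_cast_no_check (erefl true). Qed.

Lemma eqbE a b : Nat.eqb a b = (a == b).
Proof. by apply/idP/eqP => [/Nat.eqb_eq|->] //; apply: Nat.eqb_refl. Qed.
Lemma ltbE a b : Nat.ltb a b = (a < b).
Proof. by apply/idP/ltP => /Nat.ltb_lt. Qed.
Lemma nthnE s i d : nthn s i d = nth d s i.
Proof. by elim: s i => [|x s IH] [|i] //=. Qed.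
Lemma idxE s x : idx s x = index x s.
Proof. by elim: s => [|y s IH] //=; rewrite eqbE IH. Qed.
Lemma apE s i : ap s i = nth i s i.
Proof. by rewrite /ap nthnE. Qed.
Lemma mvfE f j : mvf f j = (f j != j).
Proof. by rewrite /mvf eqbE. Qed.
Lemma tabE kk f j : j < kk -> ap (tab kk f) j = f j.
Proof.
by move=> lt; rewrite apE /tab (nth_map 0) ?size_iota // nth_iota.
Qed.
Lemma nthz_iota (F : nat -> int) m kk j : j < kk -> nthz (map F (iota m kk)) j = F (m + j).
Proof.
elim: kk m j => [|k IH] m j //= lt.
case: j lt => [|j] //= lt; first by rewrite addn0.
by rewrite IH // addSnnS.
Qed.
Lemma nthz_tab kk (F : nat -> int) j : j < kk -> nthz (map F (iota 0 kk)) j = F j.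
Proof. by move=> lt; rewrite nthz_iota. Qed.

Section Valid.
Variables (kk : nat) (s : seq nat).
Hypothesis vs : perm_eq s (iota 0 kk).
Lemma v_size : size s = kk.
Proof. by rewrite (perm_size vs) size_iota. Qed.
Lemma v_uniq : uniq s.
Proof. by rewrite (perm_uniq vs) iota_uniq. Qed.
Lemma v_mem j : (j \in s) = (j < kk).
Proof. by rewrite (perm_mem vs) mem_iota. Qed.
Lemma v_ap_lt j : j < kk -> ap s j < kk.
Proof. by move=> lt; rewrite apE -v_mem mem_nth // v_size. Qed.
Lemma v_ap_inj j j' : j < kk -> j' < kk -> ap s j = ap s j' -> j = j'.
Proof.
move=> lt lt'; rewrite !apE (set_nth_default 0 j) ?v_size // (set_nth_default 0 j') ?v_size //.
by move/eqP; rewrite nth_uniq ?v_size ?v_uniq // => /eqP.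
Qed.
Lemma v_api_lt j : j < kk -> api s j < kk.
Proof. by move=> lt; rewrite /api ltbE v_size lt idxE -v_size index_mem v_mem. Qed.
Lemma v_ap_api j : j < kk -> ap s (api s j) = j.
Proof.
move=> lt; rewrite /api ltbE v_size lt idxE apE.
by rewrite (set_nth_default j) ?nth_index ?v_mem // index_mem v_mem.
Qed.
Lemma v_api_ap j : j < kk -> api s (ap s j) = j.
Proof.
move=> lt; apply: v_ap_inj; rewrite ?v_api_lt ?v_ap_lt //.
by rewrite v_ap_api // v_ap_lt.
Qed.
End Valid.

Section Transport.
Variables (n : nat) (U : {set 'I_n}) (z0 : 'I_n).
Local Notation kk := #|U|.
Definition io (j : nat) : 'I_n := nth z0 (enum U) j.
Definition ro (z : 'I_n) : nat := index z (enum U).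
Lemma size_e : size (enum U) = kk.
Proof. by rewrite cardE. Qed.
Lemma io_in j : j < kk -> io j \in U.
Proof. by move=> lt; rewrite /io -mem_enum mem_nth ?size_e. Qed.
Lemma ro_io j : j < kk -> ro (io j) = j.
Proof. by move=> lt; rewrite /ro /io index_uniq ?enum_uniq ?size_e. Qed.
Lemma io_ro z : z \in U -> io (ro z) = z.
Proof. by move=> zU; rewrite /io /ro nth_index ?mem_enum. Qed.
Lemma ro_lt z : z \in U -> ro z < kk.
Proof. by move=> zU; rewrite /ro -size_e index_mem mem_enum. Qed.
Lemma io_inj j j' : j < kk -> j' < kk -> (io j == io j') = (j == j').
Proof.
move=> lt lt'; apply/eqP/eqP => [E|->] //.
by rewrite -(ro_io lt) -(ro_io lt') E.
Qed.

Definition relP (P : {perm 'I_n}) (t : seq nat) :=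
  (forall z, z \notin U -> P z = z) /\ (forall j, j < kk -> ap t j < kk /\ P (io j) = io (ap t j)).

Lemma relM P Q t u : relP P t -> relP Q u -> relP (P * Q)%g (tab kk (fun j => ap u (ap t j))).
Proof.
move=> [P1 P2] [Q1 Q2]; split=> [z zU|j lt]; first by rewrite permM P1 // Q1.
rewrite tabE // permM; have [lt1 ->] := P2 j lt; have [lt2 ->] := Q2 _ lt1; by [].
Qed.

Lemma relV P t : perm_eq t (iota 0 kk) -> relP P t -> relP P^-1%g (tab kk (api t)).
Proof.
move=> vt [P1 P2]; split=> [z zU|j lt].
  by apply: (@perm_inj _ P); rewrite permKV P1.
rewrite tabE // (v_api_lt vt lt); split=> //.
apply: (@perm_inj _ P); rewrite permKV.
by have [_ ->] := P2 _ (v_api_lt vt lt); rewrite (v_ap_api vt lt).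
Qed.

Lemma rel_mv P t j : relP P t -> j < kk -> (P (io j) != io j) = mvf (ap t) j.
Proof. by move=> [_ P2] lt; have [lt1 ->] := P2 j lt; rewrite mvfE io_inj. Qed.

Lemma rel_iter P t j i : relP P t -> j < kk ->
  iter i P (io j) = io (iter i (ap t) j) /\ iter i (ap t) j < kk.
Proof.
move=> [_ P2] lt; elim: i => [|i [IH1 IH2]] //=.
by rewrite IH1; have [lt1 ->] := P2 _ IH2.
Qed.

Lemma rel_fix P t i z : relP P t -> z \notin U -> iter i P z = z.
Proof. by move=> [P1 _] zU; elim: i => //= i ->; rewrite P1. Qed.
End Transport.

Lemma porbit_card (T : finType) (P : {perm T}) z k : 0 < k ->
  (#|porbit P z| == k) = (iter k P z == z) && all (fun i => iter i P z != z) (iota 1 k.-1).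
Proof.
move=> k0; set m := #|porbit P z|.
have m0 : 0 < m by rewrite lt0n card_porbit_neq0.
have itm : iter m P z = z by apply: iter_porbit.
have Ut : uniq (traject P z m) by apply: uniq_traject_porbit.
have A i : 0 < i < m -> iter i P z != z.
  case/andP=> i0 im; rewrite -(nth_traject P im).
  have E : z = nth z (traject P z m) 0 by rewrite (nth_traject P m0).
  rewrite [X in _ != X]E.
  by rewrite nth_uniq ?size_traject // -lt0n.
apply/eqP/andP => [mk|[itk /allP H]].
  split; first by rewrite -mk itm.
  apply/allP => i; rewrite mem_iota => /andP [i1 i2]; apply: A.
  by rewrite i1 mk /=; move: i2; rewrite add1n prednK.
case: (ltngtP m k) => [mk|km|] //.
  by have := H m; rewrite mem_iota m0 add1n prednK // mk itm => /(_ isT); rewrite eqxx.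
by have := A k; rewrite k0 km => /(_ isT); rewrite (eqP itk) eqxx.
Qed.

Section Transport2.
Variables (n : nat) (U : {set 'I_n}) (z0 : 'I_n).
Local Notation kk := #|U|.
Local Notation io := (io U z0).
Local Notation ro := (ro U).
Local Notation relP := (relP U z0).

Lemma rel_iter_eq P t j i : relP P t -> j < kk ->
  (iter i P (io j) == io j) = Nat.eqb (iter i (ap t) j) j.
Proof. by move=> rP lt; have [-> lt1] := rel_iter i rP lt; rewrite io_inj // eqbE. Qed.

Lemma rel_card P t : relP P t ->
  #|[set i | P i != i]| = count (fun j => negb (Nat.eqb (ap t j) j)) (iota 0 kk).
Proof.
move=> rP; have [P1 P2] := rP.
have -> : #|[set i | P i != i]| = size [seq z <- enum U | P z != z].
  have Ufl : uniq [seq z <- enum U | P z != z] by rewrite filter_uniq ?enum_uniq.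
  rewrite -(elimT card_uniqP Ufl); apply: eq_card => z.
  rewrite inE mem_filter mem_enum; case: (boolP (z \in U)) => zU; rewrite ?andbT //.
  by rewrite P1 // eqxx.
rewrite size_filter -(mkseq_nth z0 (enum U)) size_e /mkseq count_map.
apply: eq_in_count => j; rewrite mem_iota add0n => /andP [_ lt] /=.
by rewrite (rel_mv rP lt) mvfE eqbE.
Qed.

Lemma rel_kcyc P t k : relP P t -> 1 < k -> is_kcycle k P = mkc kk (ap t) k.
Proof.
move=> rP k1; have [P1 P2] := rP.
rewrite /is_kcycle /mkc (rel_card rP) eqbE; congr andb.
apply/existsP/hasP; last first.
  case=> j; rewrite mem_iota add0n => /andP [_ lt] /andP [itk /allP H].
  exists (io j); rewrite porbit_card ?(ltnW k1) // (rel_iter_eq _ rP lt) itk /=.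
  by apply/allP => m /H; rewrite (rel_iter_eq _ rP lt).
case=> i; rewrite porbit_card ?(ltnW k1) // => /andP [itk /allP H].
case: (boolP (i \in U)) => iU; last first.
  have := H 1; rewrite mem_iota /= (P1 _ iU) eqxx add1n prednK ?(ltnW k1) // k1.
  by move/(_ isT).
exists (ro i); first by rewrite mem_iota add0n ro_lt.
have lt := ro_lt iU.
rewrite -(rel_iter_eq _ rP lt) io_ro // itk /=.
by apply/allP => m /H; rewrite -(rel_iter_eq _ rP lt) io_ro.
Qed.
End Transport2.

Section Lift.
Variables (n : nat) (U : {set 'I_n}) (z0 : 'I_n).
Local Notation kk := #|U|.
Local Notation io := (io U z0).
Local Notation ro := (ro U).
Local Notation relP := (relP U z0).
Local Notation valid s := (perm_eq s (iota 0 kk)).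

Definition lf (s : seq nat) (z : 'I_n) : 'I_n := if z \in U then io (ap s (ro z)) else z.

Lemma lf_inj s : valid s -> injective (lf s).
Proof.
move=> vs z z'; rewrite /lf.
case: (boolP (z \in U)) => zU; case: (boolP (z' \in U)) => z'U.
- move/eqP; rewrite io_inj ?(v_ap_lt vs) ?ro_lt // => /eqP.
  move/(v_ap_inj vs (ro_lt zU) (ro_lt z'U)) => E.
  by rewrite -(io_ro z0 zU) -(io_ro z0 z'U) E.
- by move=> E; move: z'U; rewrite -E io_in ?(v_ap_lt vs) ?ro_lt.
- by move=> E; move: zU; rewrite E io_in ?(v_ap_lt vs) ?ro_lt.
- by [].
Qed.

Definition plift (s : seq nat) : {perm 'I_n} :=
  if injectiveP (lf s) is ReflectT H then perm H else 1%g.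

Lemma liftE s z : valid s -> plift s z = lf s z.
Proof.
move=> vs; rewrite /plift; case: injectiveP => [H|H]; first by rewrite permE.
by case: H; apply: lf_inj.
Qed.

Lemma rel_lift s : valid s -> relP (plift s) s.
Proof.
move=> vs; split=> [z zU|j lt]; first by rewrite liftE // /lf (negbTE zU).
by rewrite liftE // /lf io_in // ro_io // (v_ap_lt vs).
Qed.

Definition pres (y : {perm 'I_n}) := tab kk (fun j => ro (y (io j))).

Section Res.
Variable y : {perm 'I_n}.
Hypothesis yU : forall z, z \notin U -> y z = z.
Lemma yinU z : z \in U -> y z \in U.
Proof.
move=> zU; apply/negPn/negP => yzU.
by move: (yU yzU) => /perm_inj E; move: zU; rewrite -E (negbTE yzU).
Qed.
Lemma res_valid : valid (pres y).
Proof.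
have Ur : uniq (pres y).
  rewrite map_inj_in_uniq ?iota_uniq // => j j'; rewrite !mem_iota !add0n => /andP[_ lt] /andP[_ lt'].
  move=> E; have : io (ro (y (io j))) = io (ro (y (io j'))) by rewrite E.
  rewrite !io_ro ?yinU ?io_in // => /perm_inj /eqP; rewrite io_inj // => /eqP.
  by [].
have sub : {subset pres y <= iota 0 kk}.
  move=> i /mapP [j]; rewrite !mem_iota !add0n => /andP[_ lt] ->.
  by rewrite ro_lt // yinU // io_in.
have szr : size (iota 0 kk) <= size (pres y) by rewrite /pres /tab size_map.
have [_ E] := uniq_min_size Ur sub szr.
by apply: uniq_perm; rewrite ?iota_uniq.
Qed.
Lemma rel_res : relP y (pres y).
Proof.
split=> // j lt; rewrite tabE //; have yio : y (io j) \in U by rewrite yinU ?io_in.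
by rewrite ro_lt // io_ro.
Qed.
Lemma lift_res : plift (pres y) = y.
Proof.
apply/permP => z; rewrite liftE ?res_valid // /lf.
case: (boolP (z \in U)) => zU; last by rewrite yU.
by rewrite tabE ?ro_lt // io_ro // io_ro // yinU.
Qed.
End Res.

Lemma lift_inj s s' : valid s -> valid s' -> plift s = plift s' -> s = s'.
Proof.
move=> vs vs' E.
have H j : j < kk -> ap s j = ap s' j.
  move=> lt; have := congr1 (fun P : {perm 'I_n} => P (io j)) E.
  have [_ /(_ j lt) [l1 ->]] := rel_lift vs; have [_ /(_ j lt) [l2 ->]] := rel_lift vs'.
  by move/eqP; rewrite io_inj // => /eqP.
apply: (@eq_from_nth _ 0); first by rewrite (v_size vs) (v_size vs').
move=> j; rewrite (v_size vs) => lt; have := H j lt.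
by rewrite !apE (set_nth_default 0 j) ?(v_size vs) // (set_nth_default 0 j) ?(v_size vs').
Qed.

Lemma sum_lift (F : {perm 'I_n} -> int) (Pr : pred {perm 'I_n}) :
  (forall y, Pr y -> forall z, z \notin U -> y z = z) ->
  (\sum_(y | Pr y) F y = \sum_(s <- permutations (iota 0 kk) | Pr (plift s)) F (plift s))%R.
Proof.
move=> HP; rewrite -(big_map plift Pr F).
have Um : uniq (map plift (permutations (iota 0 kk))).
  rewrite map_inj_in_uniq ?permutations_uniq // => s s'.
  by rewrite !mem_permutations => vs vs'; apply: lift_inj.
rewrite [RHS]big_mkcond (big_uniq _ Um) -big_mkcondr /=.
apply: eq_bigl => y; case: (boolP (Pr y)) => Py; rewrite ?andbF ?andbT //.
apply/esym/mapP; exists (pres y); last by rewrite lift_res //; apply: HP.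
by rewrite mem_permutations res_valid //; apply: HP.
Qed.
End Lift.

Section Core.
Variable n : nat.
Implicit Types (x y g : {perm 'I_n}) (i p q r l m z : 'I_n).
Definition Rn x y i : int :=
  (zb (y (x^-1%g i) != x^-1%g i) - zb (y (x i) != x i)
   - 2 * zb (y ((x * x)^-1%g i) != (x * x)^-1%g i) + 2 * zb (y ((x * x)%g i) != (x * x)%g i))%R.
Definition sgn y l m : int :=
  if (y l != l) && (m == y l) then 1%R else if (y m != m) && (l == y m) then (-1)%R else 0%R.
Definition Mn g y p q r : int :=
  let x := (y^-1 * g)%g in
  if is_kcycle 3 y && is_kcycle 5 x then
   (sgn y q r * (Rn x y p + Rn x y (y p)) + sgn y r p * (Rn x y q + Rn x y (y q))
    + sgn y p q * (Rn x y r + Rn x y (y r)))%R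
  else 0%R.
Definition Ucl g y := [set z | (y z != z) || ((y^-1 * g)%g z != z)].
End Core.

Section LocalTransport.
Variables (n : nat) (U : {set 'I_n}) (z0 : 'I_n) (g : {perm 'I_n}).
Hypothesis gU : forall z, z \notin U -> g z = z.
Local Notation kk := #|U|.
Local Notation io := (io U z0).
Local Notation ro := (ro U).
Local Notation relP := (relP U z0).
Local Notation valid s := (perm_eq s (iota 0 kk)).
Local Notation plift := (plift U z0).
Let g' := pres U z0 g.
Let gi := tab kk (api g').
Lemma vg' : valid g'. Proof. exact: res_valid. Qed.
Lemma rPg : relP g g'. Proof. exact: rel_res. Qed.
Lemma rPgi : relP g^-1%g gi. Proof. exact: relV vg' rPg. Qed.

Section S.
Variable s : seq nat.
Hypothesis vs : valid s.
Let si := tab kk (api s).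
Let y := plift s.
Let x := (y^-1 * g)%g.
Let xt := xtab kk g' si.
Let xit := xtab kk s gi.
Lemma rPy : relP y s. Proof. exact: rel_lift. Qed.
Lemma rPyi : relP y^-1%g si. Proof. exact: relV vs rPy. Qed.
Lemma rPx : relP x xt. Proof. exact: relM rPyi rPg. Qed.
Lemma rPxi : relP x^-1%g xit.
Proof. by rewrite /x invMg invgK; exact: relM rPgi rPy. Qed.

Lemma Rn_tr j : j < kk -> Rn x y (io j) = Rf (ap s) (ap xt) (ap xit) j.
Proof.
move=> lt; have [_ Hx] := rPx; have [_ Hxi] := rPxi.
rewrite /Rn /Rf (invMg x x) !(permM x^-1%g x^-1%g) !(permM x x).
have [l1 ->] := Hxi j lt; have [l2 ->] := Hxi _ l1.
have [l3 ->] := Hx j lt; have [l4 ->] := Hx _ l3.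
by rewrite !(rel_mv rPy).
Qed.

Lemma sgn_tr l m : l < kk -> m < kk -> sgn y (io l) (io m) = sgf (ap s) l m.
Proof.
move=> ll lm; have [_ Hy] := rPy.
rewrite /sgn /sgf !(rel_mv rPy) //.
have [_ ->] := Hy l ll; have [_ ->] := Hy m lm.
by rewrite !io_inj ?(v_ap_lt vs) // !eqbE.
Qed.

Lemma Mn_tr p q r : p < kk -> q < kk -> r < kk ->
  Mn g y (io p) (io q) (io r) =
  if mkc kk (ap s) 3 && mkc kk (ap xt) 5 then Mf (ap s) (nthz (Rt kk (g', gi) (s, si))) p q r else 0%R.
Proof.
move=> lp lq lr; rewrite /Mn -/x (rel_kcyc rPy) // (rel_kcyc rPx) //.
case: ifP => // _; have [_ Hy] := rPy.
have [lp' ->] := Hy p lp; have [lq' ->] := Hy q lq; have [lr' ->] := Hy r lr.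
rewrite !sgn_tr // !Rn_tr // /Mf /Rt /= !nthz_tab //.
Qed.

Lemma Ucl_tr : (Ucl g y == U) = all (fun j => mvf (ap s) j || mvf (ap xt) j) (iota 0 kk).
Proof.
have [Py _] := rPy; have [Px _] := rPx.
apply/eqP/allP => [E j|H].
  rewrite mem_iota add0n => /andP [_ lt].
  have : io j \in Ucl g y by rewrite E io_in.
  by rewrite inE -/x (rel_mv rPy) // (rel_mv rPx).
apply/setP => z; rewrite inE -/x.
case: (boolP (z \in U)) => zU; last by rewrite Py // Px // eqxx.
have lt := ro_lt zU; have := H (ro z); rewrite mem_iota add0n lt => /(_ isT).
by rewrite -(rel_mv rPy) // -(rel_mv rPx) // io_ro.
Qed.
End S.
End LocalTransport.

Lemma sumzE (l : seq int) : sumz l = (\sum_(a <- l) a)%R.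
Proof. by elim: l => [|a l IH]; rewrite ?big_nil ?big_cons //= IH. Qed.

Lemma checkP kk : check kk -> forall g', g' \in permutations (iota 0 kk) ->
  forall p q r, p < kk -> q < kk -> r < kk ->
  (\sum_(s <- permutations (iota 0 kk) |
      mkc kk (ap s) 3 && cond5 kk (g', tab kk (api g')) (s, tab kk (api s)))
     Mf (ap s) (nthz (Rt kk (g', tab kk (api g')) (s, tab kk (api s)))) p q r = 0)%R.
Proof.
rewrite /check /= => /allP H g' g'in p q r lp lq lr.
have := H (g', tab kk (api g')) (map_f (fun s => (s, tab kk (api s))) g'in).
move=> /allP /(_ p) ; rewrite mem_iota add0n lp => /(_ isT).
move=> /allP /(_ q) ; rewrite mem_iota add0n lq => /(_ isT).
move=> /allP /(_ r) ; rewrite mem_iota add0n lr => /(_ isT) /eqP.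
rewrite sumzE !big_map big_filter big_filter_cond big_map /=.
by [].
Qed.

Lemma local_sum n (U : {set 'I_n}) (z0 : 'I_n) (g : {perm 'I_n}) :
  (forall z, z \notin U -> g z = z) -> check #|U| ->
  forall p q r, p < #|U| -> q < #|U| -> r < #|U| ->
  (\sum_(y | Ucl g y == U) Mn g y (io U z0 p) (io U z0 q) (io U z0 r) = 0)%R.
Proof.
move=> gU ck p q r lp lq lr.
rewrite (@sum_lift _ U z0 (fun y => Mn g y (io U z0 p) (io U z0 q) (io U z0 r)) (fun y => Ucl g y == U)); last first.
  move=> y /eqP E z zU; move: zU; rewrite -E inE negb_or => /andP [/negPn/eqP -> _] //.
rewrite big_seq_cond.
have vg := vg' z0 gU.
have gin : pres U z0 g \in permutations (iota 0 #|U|) by rewrite mem_permutations.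
rewrite -[RHS](checkP ck gin lp lq lr).
rewrite [RHS]big_seq_cond big_mkcond [RHS]big_mkcond; apply: eq_bigr => s _.
case: (boolP (s \in permutations (iota 0 #|U|))) => //= sin.
have vs : perm_eq s (iota 0 #|U|) by rewrite -mem_permutations.
rewrite (Ucl_tr z0 gU vs) (Mn_tr z0 gU vs lp lq lr) /cond5 /=.
by case: (mkc _ _ 3); case: (mkc _ _ 5); case: all.
Qed.

Section Zero.
Variable n : nat.
Implicit Types (x y g : {perm 'I_n}) (i p q r l m z : 'I_n).

Lemma Mn_cyc g y p q r : Mn g y p q r = Mn g y q r p.
Proof.
rewrite /Mn; case: ifP => // _.
by rewrite -!addrA addrC -!addrA; congr (_ + _)%R; rewrite addrC.
Qed.

Lemma Rn_fix x y p : y p = p -> x p = p -> Rn x y p = 0%R.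
Proof.
move=> yp xp; have xip : x^-1%g p = p by rewrite -{1}xp permK.
rewrite /Rn invMg !permM !xip !xp !yp eqxx /zb /=.
by rewrite !mulr0 !subr0.
Qed.

Lemma Mn_out g y p q r : p \notin Ucl g y -> Mn g y p q r = 0%R.
Proof.
rewrite inE negb_or !negbK => /andP [/eqP yp /eqP xp].
rewrite /Mn; case: ifP => // _.
have s1 : sgn y r p = 0%R.
  rewrite /sgn yp eqxx /=; case: ifP => // /andP [nr /eqP E].
  have : y (y r) = y r by rewrite -E yp.
  by move/perm_inj => E2; rewrite E2 eqxx in nr.
have s2 : sgn y p q = 0%R.
  rewrite /sgn yp eqxx /=; case: ifP => // /andP [nq /eqP E].
  have : y (y q) = y q by rewrite -E yp.
  by move/perm_inj => E2; rewrite E2 eqxx in nq.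
by rewrite s1 s2 yp !(Rn_fix yp xp) !mul0r !addr0 mulr0.
Qed.

Lemma supp_Ucl g y z : g z != z -> z \in Ucl g y.
Proof.
move=> gz; rewrite inE; case: (boolP (y z != z)) => //= /negPn /eqP yz.
rewrite permM; have -> : y^-1%g z = z by rewrite -{1}yz permK.
by [].
Qed.

Lemma Rn_disj x y i : (forall z, y z != z -> x z = z) -> Rn x y i = 0%R.
Proof.
move=> H.
have Sx j : (y (x j) != x j) = (y j != j).
  case: (boolP (y j != j)) => Sj; first by rewrite H.
  case: (boolP (y (x j) != x j)) => // Sxj.
  have := H _ Sxj => /perm_inj E.
  by move: Sxj; rewrite E (negbTE Sj).
have Sxi j : (y (x^-1%g j) != x^-1%g j) = (y j != j) by rewrite -Sx permKV.
rewrite /Rn invMg !permM !Sxi !Sx.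
by rewrite subrr sub0r addrC subrr.
Qed.
End Zero.

Lemma Mn_card n (g y : {perm 'I_n}) p q r : Mn g y p q r != 0%R -> 4 < #|Ucl g y| < 8.
Proof.
rewrite /Mn; set x := (y^-1 * g)%g.
case: ifP => [/andP [cy cx]|]; last by rewrite eqxx.
move=> nz.
set A := [set z | y z != z]; set B := [set z | x z != z].
have cA : #|A| = 3 by move: cy => /andP [/eqP -> _].
have cB : #|B| = 5 by move: cx => /andP [/eqP -> _].
have UE : Ucl g y = A :|: B by apply/setP => z; rewrite !inE.
rewrite UE; apply/andP; split.
  by rewrite -cB subset_leq_card // subsetUr.
have := cardsUI A B; rewrite cA cB => E.
rewrite ltnNge; apply/negP => le8.
have I0 : #|A :&: B| = 0.
  by apply/eqP; rewrite -leqn0 -(leq_add2l #|A :|: B|) E addn0.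
have D : forall z, y z != z -> x z = z.
  move=> z Sz; apply/eqP/negPn/negP => xz.
  by have := card0_eq I0 z; rewrite !inE Sz xz.
by move: nz; rewrite !(Rn_disj _ D) !addr0 !mulr0 !addr0 eqxx.
Qed.

Lemma core n (g : {perm 'I_n}) p q r : (\sum_(y : {perm 'I_n}) Mn g y p q r = 0)%R.
Proof.
rewrite (partition_big (fun y => Ucl g y) (fun _ => true)) //=.
apply: big1 => U _.
case: (boolP ((p \in U) && (q \in U) && (r \in U) && [forall z, (z \notin U) ==> (g z == z)]
               && (4 < #|U| < 8))) => [/andP[/andP[/andP[/andP[pU qU] rU] /forallP gU] cU] | H].
  have gU' : forall z, z \notin U -> g z = z by move=> z zU; apply/eqP; exact: (implyP (gU z) zU).
  have ck : check #|U|.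
    have : #|U| \in iota 5 3 by rewrite mem_iota.
    rewrite !inE => /or3P [] /eqP ->; [exact: check5 | exact: check6 | exact: check7].
  rewrite -(io_ro p pU) -(io_ro p qU) -(io_ro p rU).
  by apply: local_sum => //; apply: ro_lt.
apply: big1 => y /eqP E; rewrite -E in H.
case: (boolP (p \in Ucl g y)) => pU; last exact: Mn_out.
case: (boolP (q \in Ucl g y)) => qU; last by rewrite Mn_cyc; exact: Mn_out.
case: (boolP (r \in Ucl g y)) => rU; last by rewrite Mn_cyc Mn_cyc; exact: Mn_out.
apply/eqP; apply: contraNT H => nz; rewrite pU qU rU (Mn_card nz) andbT /=.
apply/forallP => z; apply/implyP => zU; apply/negPn/negP => gz.
by move: zU; rewrite supp_Ucl.
Qed.

Local Open Scope ring_scope.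

Section Alg.
Variables (R : realType) (n : nat).
Local Notation C := (R[i]).
Local Notation V := ('rV[C]_n).
Implicit Types (x y g : {perm 'I_n}).

Lemma sum_delta (F : 'I_n -> C) (k : 'I_n) : \sum_j F j * (k == j)%:R = F k.
Proof.
rewrite (bigD1 k) //= eqxx mulr1 big1 ?addr0 // => j /negbTE.
by rewrite eq_sym => ->; rewrite mulr0.
Qed.

Lemma sum_pmat1 (w : V) h i : \sum_j w 0 j * pmat R h i j = w 0 (h^-1%g i).
Proof.
rewrite -sum_delta; apply: eq_bigr => j _; rewrite /pmat; congr (_ * (_ : bool)%:R).
by apply/eqP/eqP => [->|<-]; rewrite ?permK ?permKV.
Qed.

Lemma sum_pmat2 (w : V) h i : \sum_j w 0 j * pmat R h j i = w 0 (h i).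
Proof.
rewrite -sum_delta; apply: eq_bigr => j _; rewrite /pmat; congr (_ * (_ : bool)%:R).
by rewrite eq_sym.
Qed.

Lemma zbE (c : bool) (a b : C) : (if c then a else b) = b + (a - b) * (zb c)%:~R.
Proof. by case: c => /=; rewrite ?mulr1 ?mulr0 ?addr0 // addrC subrK. Qed.

Lemma kappaC_wtri (a b : C) x y (u : V) : is_kcycle 5 x ->
  kappaC_penta a b x u (wtri a b y) = (a - b) ^+ 3 * \sum_i u 0 i * (Rn x y i)%:~R.
Proof.
move=> cx; rewrite /kappaC_penta cx /bilinC mulr_sumr; apply: eq_bigr => i _.
set w := wtri a b y.
transitivity (u 0 i * (a - b) ^+ 2 * ((\sum_j w 0 j * pmat R x i j) - (\sum_j w 0 j * pmat R x j i)
     - 2 * (\sum_j w 0 j * pmat R (x * x)%g i j) + 2 * (\sum_j w 0 j * pmat R (x * x)%g j i))).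
  rewrite !mulr_sumr -!sumrN -!big_split /= mulr_sumr; apply: eq_bigr => j _.
  rewrite /kappaC_basis; ring.
rewrite !sum_pmat1 !sum_pmat2 /w !mxE !zbE /Rn.
rewrite !intrD !intrN !intrM.
ring.
Qed.

Lemma kappaL_eq (a b : C) y (v w : V) : is_kcycle 3 y ->
  kappaL_tri a b y v w = (\sum_l \sum_m v 0 l * w 0 m * (sgn y l m)%:~R) *: wtri a b y.
Proof.
move=> cy; rewrite /kappaL_tri cy /bilinV scaler_suml; apply: eq_bigr => l _.
rewrite scaler_suml; apply: eq_bigr => m _; rewrite -(scalerA (v 0 l * w 0 m)); congr (_ *: _).
rewrite /kappaL_basis /sgn; case: ifP => _; first by rewrite (_ : (1 : int)%:~R = 1 :> C) ?scale1r.
case: ifP => _; last by rewrite (_ : (0 : int)%:~R = 0 :> C) ?scale0r.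
by rewrite intrN (_ : (1 : int)%:~R = 1 :> C) ?scaleN1r.
Qed.

Lemma kappaC_scale (a b : C) x (u : V) (c : C) (w : V) :
  kappaC_penta a b x u (c *: w) = c * kappaC_penta a b x u w.
Proof.
rewrite /kappaC_penta; case: ifP => _; last by rewrite mulr0.
rewrite /bilinC mulr_sumr; apply: eq_bigr => i _; rewrite mulr_sumr; apply: eq_bigr => j _.
by rewrite mxE; ring.
Qed.

Lemma kappaC_zero (a b : C) x (u : V) : kappaC_penta a b x u 0 = 0.
Proof.
rewrite /kappaC_penta; case: ifP => _ //; rewrite /bilinC big1 // => i _.
by rewrite big1 // => j _; rewrite mxE mulr0 mul0r.
Qed.

Lemma pact_sum y (u : V) (F : 'I_n -> C) :
  \sum_i (u + pact y u) 0 i * F i = \sum_p u 0 p * (F p + F (y p)).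
Proof.
rewrite (eq_bigr (fun i => u 0 i * F i + u 0 (y^-1%g i) * F i)); last first.
  by move=> i _; rewrite !mxE mulrDl.
rewrite big_split /= [X in _ + X](reindex_inj (@perm_inj _ y)) /= -big_split.
by apply: eq_bigr => p _; rewrite permK mulrDr.
Qed.

Lemma rearr (A B D H : 'I_n -> C) (K : 'I_n -> 'I_n -> C) (k : C) :
  (\sum_q \sum_r B q * D r * K q r) * (k * \sum_p A p * H p) =
  k * \sum_p \sum_q \sum_r A p * B q * D r * (K q r * H p).
Proof.
rewrite mulrCA; congr (_ * _); rewrite mulrC mulr_suml; apply: eq_bigr => p _.
rewrite mulr_sumr; apply: eq_bigr => q _; rewrite mulr_sumr; apply: eq_bigr => r _.
ring.
Qed.

Lemma rot3 (F : 'I_n -> 'I_n -> 'I_n -> C) :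
  \sum_p \sum_q \sum_r F p q r = \sum_q \sum_r \sum_p F p q r.
Proof. by rewrite exchange_big; apply: eq_bigr => q _; rewrite exchange_big. Qed.
End Alg.

Section Main.
Variables (R : realType) (n : nat) (a b : R[i]) (g : {perm 'I_n}) (v1 v2 v3 : 'rV[R[i]]_n).
Local Notation C := (R[i]).

Lemma phi_xy_eq (y : {perm 'I_n}) :
  phi_xy (@kappaC_penta R n a b) (@kappaL_tri R n a b) (y^-1 * g)%g y v1 v2 v3 =
  (a - b) ^+ 3 * \sum_p \sum_q \sum_r v1 0 p * v2 0 q * v3 0 r * (Mn g y p q r)%:~R.
Proof.
rewrite /phi_xy /Mn; set x := (y^-1 * g)%g.
case: (boolP (is_kcycle 3 y)) => cy; last first.
  rewrite /kappaL_tri (negbTE cy) /= !kappaC_zero !addr0.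
  by rewrite big1 ?mulr0 // => p _; rewrite big1 // => q _; rewrite big1 // => r _; rewrite mulr0.
case: (boolP (is_kcycle 5 x)) => cx /=; last first.
  rewrite /kappaC_penta (negbTE cx) !addr0.
  by rewrite big1 ?mulr0 // => p _; rewrite big1 // => q _; rewrite big1 // => r _; rewrite mulr0.
rewrite !kappaL_eq // !kappaC_scale !kappaC_wtri // !pact_sum.
set Rc := fun i => (Rn x y i)%:~R : C.
set sc := fun l m => (sgn y l m)%:~R : C.
set H := fun i => Rc i + Rc (y i).
rewrite (rearr (fun p => v1 0 p) (fun q => v2 0 q) (fun r => v3 0 r) H sc).
rewrite (rearr (fun p => v2 0 p) (fun q => v3 0 q) (fun r => v1 0 r) H sc).
rewrite (rearr (fun p => v3 0 p) (fun q => v1 0 q) (fun r => v2 0 r) H sc).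
rewrite -!mulrDr; congr (_ * _).
rewrite [X in _ + X + _]rot3 [X in _ + X + _]rot3 [X in _ + X]rot3.
rewrite -!big_split /=; apply: eq_bigr => p _; rewrite -!big_split /=; apply: eq_bigr => q _.
rewrite -!big_split /=; apply: eq_bigr => r _.
rewrite /H /Rc /sc; move: (Rn x y) (sgn y) => RR SS; ring.
Qed.
End Main.

Theorem proposition7p7 (R : realType) (n : nat) (hn : (3 <= n)%N) (a b : R[i])
  (g : {perm 'I_n}) (v1 v2 v3 : 'rV[R[i]]_n) :
  phi_g (@kappaC_penta R n a b) (@kappaL_tri R n a b) g v1 v2 v3 = 0.
Proof.
rewrite /phi_g (exchange_big_dep xpredT) //=.
rewrite (eq_bigr (fun y => phi_xy (@kappaC_penta R n a b) (@kappaL_tri R n a b) (y^-1 * g)%g y v1 v2 v3)); last first.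
  move=> y _; rewrite (big_pred1 (y^-1 * g)%g) // => x /=.
  by apply/eqP/eqP => [<-|->]; rewrite ?mulKg ?mulKVg.
under eq_bigr do rewrite phi_xy_eq.
rewrite -mulr_sumr; apply/eqP; rewrite mulf_eq0; apply/orP; right; apply/eqP.
rewrite exchange_big; apply: big1 => p _; rewrite exchange_big; apply: big1 => q _.
rewrite exchange_big; apply: big1 => r _; rewrite -mulr_sumr.
have := congr1 (fun z : int => z%:~R : R[i]) (core g p q r).
rewrite (big_morph (fun z : int => z%:~R : R[i]) (@intrD _) (erefl _)) /= => ->.
by rewrite mulr0.
Qed.
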